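(* Let $(T,f)$ be a merge tree and $\sigma\colon[0,1]\to T$ a curve. Any two distinct maximal violating subcurves of $\sigma$ are interior-disjoint.
   Context: A merge tree $(T,f)$: a finite rooted tree $T$ identified with its topological realisation, with a continuous $f\colon T\to\mathbb{R}\cup\{\infty\}$ strictly increasing towards the root, $f(v)=\infty$ iff $v$ is the root. A curve on $T$ is a continuous map $\sigma\colon[0,1]\to T$. A subcurve $[\ell,r]$ ($\ell,r\in[0,1]$) of $\sigma$ is violating if $\ell<r$, $\sigma(\ell)=\sigma(r)$, and $f(\sigma(t))>f(\sigma(\ell))$ for all $t\in(\ell,r)$. A violating subcurve is maximal if the interval is not contained in (the interval of) any other violating subcurve of $\sigma$. Two subcurves $[\ell_1,r_1],[\ell_2,r_2]$ are interior-disjoint if $(\ell_1,r_1)\cap(\ell_2,r_2)=\emptyset$. *)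

(* Defs.v *)
From HB Require Import structures.
From mathcomp Require Import all_boot all_order all_algebra.
From mathcomp Require Import all_classical all_reals all_analysis.
Set Implicit Arguments. Unset Strict Implicit. Unset Printing Implicit Defensive.
Import Order.TTheory GRing.Theory Num.Theory.
Import numFieldNormedType.Exports.
Local Open Scope classical_set_scope.
Local Open Scope ring_scope.

Section MergeTree.
Variables (R : realType) (n : nat).

Definition rooted_tree (root : 'I_n) (par : 'I_n -> 'I_n) : Prop :=
  par root = root /\ forall v, exists k, iter k par v = root.

(* Standard geometric realisation: vertex v is the standard basis vector
   e_v of R^n; the edge {v, par v} (v <> root) is the straight segment. *)
Definition vtx (v : 'I_n) : 'rV[R]_n := delta_mx 0 v.

Definition edge_pt (par : 'I_n -> 'I_n) (v : 'I_n) (t : R) : 'rV[R]_n :=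
  (1 - t) *: vtx v + t *: vtx (par v).

Definition realisation (root : 'I_n) (par : 'I_n -> 'I_n) : set 'rV[R]_n :=
  [set vtx root] `|`
  [set x | exists v, v != root /\ exists2 t, 0 <= t <= 1 & x = edge_pt par v t].

Definition merge_tree (root : 'I_n) (par : 'I_n -> 'I_n)
    (f : 'rV[R]_n -> \bar R) : Prop :=
  [/\ rooted_tree root par,
      {within realisation root par, continuous f},
      (forall v, v != root -> forall s t, 0 <= s -> s < t -> t <= 1 ->
          (f (edge_pt par v s) < f (edge_pt par v t))%E) &
      (forall x, realisation root par x -> (f x = +oo)%E <-> x = vtx root)].

Definition curve (root : 'I_n) (par : 'I_n -> 'I_n) (sigma : R -> 'rV[R]_n)
  : Prop :=
  {within `[0, 1], continuous sigma} /\
  (forall t, 0 <= t <= 1 -> realisation root par (sigma t)).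

Definition violating (f : 'rV[R]_n -> \bar R) (sigma : R -> 'rV[R]_n)
  (l r : R) : Prop :=
  [/\ 0 <= l, r <= 1, l < r, sigma l = sigma r &
      forall t, l < t -> t < r -> (f (sigma l) < f (sigma t))%E].

Definition maximal_violating (f : 'rV[R]_n -> \bar R)
  (sigma : R -> 'rV[R]_n) (l r : R) : Prop :=
  violating f sigma l r /\
  forall l' r', violating f sigma l' r' -> l' <= l -> r <= r' ->
    l' = l /\ r' = r.

Definition interior_disjoint (l1 r1 l2 r2 : R) : Prop :=
  forall t, ~ ((l1 < t < r1) /\ (l2 < t < r2)).

End MergeTree.

(* Main.v *)
Require Import Defs.
From mathcomp Require Import all_boot all_order all_algebra.
From mathcomp Require Import all_classical all_reals all_analysis.
Import Order.TTheory GRing.Theory Num.Theory.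
Local Open Scope ring_scope.

Lemma eq_le_aux (R : realType) (a b : R) : a == b -> b <= a.
Proof. by move/eqP->. Qed.

Lemma helper18 (R : realType) (n : nat)
  (f : 'rV[R]_n -> \bar R) (sigma : R -> 'rV[R]_n) (l1 r1 l2 r2 t : R) :
  maximal_violating f sigma l1 r1 -> maximal_violating f sigma l2 r2 ->
  (l1, r1) <> (l2, r2) -> l1 <= l2 ->
  l1 < t < r1 -> l2 < t < r2 -> False.
Proof.
move=> [V1 M1] [V2 M2] ne le12 /andP[lt1 tr1] /andP[lt2 tr2].
have [le21|lt12] := leP r2 r1.
  have [e1 e2] := M2 _ _ V1 le12 le21. by apply: ne; rewrite e1 e2.
have [eql|ltl] := eqVneq l1 l2.
  have hl : l2 <= l1 by rewrite eql.
  have [e1 e2] := M1 _ _ V2 hl (ltW lt12).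
  by apply: ne; rewrite e1 e2.
have ltl2 : l1 < l2 by rewrite lt_neqAle ltl le12.
case: V1 => _ _ _ E1 H1; case: V2 => _ _ _ E2 H2.
have a := H1 l2 ltl2 (lt_trans lt2 tr1).
have b := H2 r1 (lt_trans lt2 tr1) lt12.
rewrite -E1 in b.
have := lt_trans a b. by rewrite ltxx.
Qed.

Arguments helper18 {R n f sigma l1 r1 l2 r2 t}.

Theorem lemma18 (R : realType) (n : nat) (root : 'I_n) (par : 'I_n -> 'I_n)
  (f : 'rV[R]_n -> \bar R) (sigma : R -> 'rV[R]_n) :
  merge_tree root par f -> curve root par sigma ->
  forall l1 r1 l2 r2 : R,
    maximal_violating f sigma l1 r1 -> maximal_violating f sigma l2 r2 ->
    (l1, r1) <> (l2, r2) ->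
    interior_disjoint l1 r1 l2 r2.
Proof.
move=> _ _ l1 r1 l2 r2 M1 M2 ne t [h1 h2].
have [le|le] := leP l1 l2.
  exact: (helper18 M1 M2 ne le h1 h2).
exact: (helper18 M2 M1 (fun e => ne (esym e)) (ltW le) h2 h1).
Qed.
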